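(* Let $(X,\delta,c)$ be an accepting automaton over $\Sigma$ and let $\mu\mathrm{PL}(\delta,c)$ be as in the context. Then $\mu\mathrm{PL}(\delta,c)$ is isomorphic to a preformation of languages: the map $\mathcal{U}\mapsto L(\mathcal{U})$ is an isomorphism from the state space $P(\Sigma^\ast/{\approx})$ (a complete atomic Boolean algebra) onto a preformation of languages, under which the transitions of $\mu\mathrm{PL}(\delta,c)$ correspond to language derivatives.
   Context: $\Sigma$ is a finite alphabet, $\Sigma^\ast$ the free monoid with empty word $\epsilon$, $u^r$ the reversal of $u$. An accepting automaton is $(X,\delta,c)$ with $\delta:X\to X^\Sigma$ (extended to words by $\delta(x)(\epsilon)=x$, $\delta(x)(wa)=\delta(\delta(x)(w))(a)$) and $c\subseteq X$. Define $\widehat{\delta}:P(X)\to P(X)^\Sigma$ by $\widehat{\delta}(U)(a)=\{x\mid\delta(x)(a)\in U\}$, extended to words, so $\widehat{\delta}(U)(w)=\{x\mid\delta(x)(w^r)\in U\}$. Let $\langle c\rangle=\{\widehat{\delta}(c)(w)\mid w\in\Sigma^\ast\}$ and $u\approx v$ iff $\widehat{\delta}(U)(u)=\widehat{\delta}(U)(v)$ for all $U\in\langle c\rangle$. $\mu\mathrm{PL}(\delta,c)$ has state space $P(\Sigma^\ast/{\approx})$, transition $\widehat{\sigma}(\mathcal{U})(u)=\{[w]\mid[wu^r]\in\mathcal{U}\}$ and final states $\{\mathcal{U}\mid[\epsilon]\in\mathcal{U}\}$; $L(\mathcal{U})=\{u\mid[\epsilon]\in\widehat{\sigma}(\mathcal{U})(u)\}$.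 A preformation of languages is a complete atomic Boolean subalgebra of the powerset $2^{\Sigma^\ast}$ which is closed under left derivatives $U\mapsto\{w\mid aw\in U\}$ and right derivatives $U\mapsto\{w\mid wa\in U\}$ for all $a\in\Sigma$. *)

(* Defs.v *)
From mathcomp Require Import all_boot.
Set Implicit Arguments. Unset Strict Implicit. Unset Printing Implicit Defensive.

Section Languages.
Variable A : Type.

Definition empty_lang : seq A -> Prop := fun _ => False.

Definition lderiv (a : A) (K : seq A -> Prop) : seq A -> Prop := fun w => K (a :: w).
Definition rderiv (a : A) (K : seq A -> Prop) : seq A -> Prop := fun w => K (rcons w a).

Definition complete_boolean_subalgebra (B : (seq A -> Prop) -> Prop) : Prop :=
  (forall (I : Type) (F : I -> seq A -> Prop),
      (forall i, B (F i)) -> B (fun w => exists i, F i w)) /\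
  (forall (I : Type) (F : I -> seq A -> Prop),
      (forall i, B (F i)) -> B (fun w => forall i, F i w)) /\
  (forall K, B K -> B (fun w => ~ K w)).

Definition atom_of (B : (seq A -> Prop) -> Prop) (a : seq A -> Prop) : Prop :=
  B a /\ a <> empty_lang /\
  (forall b, B b -> (forall w, b w -> a w) -> b = empty_lang \/ b = a).

Definition atomic (B : (seq A -> Prop) -> Prop) : Prop :=
  forall K, B K -> K <> empty_lang ->
    exists a, atom_of B a /\ (forall w, a w -> K w).

Definition preformation (B : (seq A -> Prop) -> Prop) : Prop :=
  complete_boolean_subalgebra B /\ atomic B /\
  (forall a K, B K -> B (lderiv a K)) /\
  (forall a K, B K -> B (rderiv a K)).

End Languages.

Section MuPL.
Variables (Sigma : finType) (X : Type) (delta : X -> Sigma -> X) (c : X -> Prop).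

Definition delta_w (x : X) (w : seq Sigma) : X := foldl delta x w.

Definition delta_hat (U : X -> Prop) (w : seq Sigma) : X -> Prop :=
  fun x => U (delta_w x (rev w)).

Definition gen_c (U : X -> Prop) : Prop := exists w, U = delta_hat c w.

Definition approx (u v : seq Sigma) : Prop :=
  forall U, gen_c U -> delta_hat U u = delta_hat U v.

Definition cls : Type := {C : seq Sigma -> Prop | exists w, C = approx w}.
Definition cls_of (w : seq Sigma) : cls := exist _ (approx w) (ex_intro _ w erefl).

Definition state : Type := cls -> Prop.

Definition sigma_hat (U : state) (u : seq Sigma) : state :=
  fun K => exists w, K = cls_of w /\ U (cls_of (w ++ rev u)).

Definition final (U : state) : Prop := U (cls_of [::]).

Definition Lang (U : state) : seq Sigma -> Prop :=
  fun u => sigma_hat U u (cls_of [::]).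

Definition state_union (I : Type) (F : I -> state) : state :=
  fun K => exists i, F i K.
Definition state_compl (U : state) : state := fun K => ~ U K.

End MuPL.

(* Main.v *)
From Stdlib Require Import FunctionalExtensionality PropExtensionality ProofIrrelevance Classical.
Require Import Defs.
From mathcomp Require Import all_boot.

Section Aux.
Context {Sigma : finType} {X : Type} {delta : X -> Sigma -> X} {c : X -> Prop}.

Local Notation approx := (@approx Sigma X delta c).
Local Notation cls_of := (@cls_of Sigma X delta c).

Lemma dh_comp (U : X -> Prop) w p :
  delta_hat delta (delta_hat delta U w) p = delta_hat delta U (w ++ p).
Proof.
apply: functional_extensionality => x.
by rewrite /delta_hat /delta_w rev_cat foldl_cat.
Qed.

Lemma approxE u v : approx u v <->
  forall w0, delta_hat delta c (w0 ++ u) = delta_hat delta c (w0 ++ v).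
Proof.
split.
- move=> H w0; rewrite -!dh_comp; apply: H; by exists w0.
- move=> H U [w0 ->]; rewrite !dh_comp; exact: H.
Qed.

Lemma approx_refl u : approx u u.
Proof. by move=> U _. Qed.
Lemma approx_sym {u v} : approx u v -> approx v u.
Proof. by move=> H U HU; rewrite (H U HU). Qed.
Lemma approx_trans {u v w} : approx u v -> approx v w -> approx u w.
Proof. by move=> H1 H2 U HU; rewrite (H1 U HU) (H2 U HU). Qed.

Lemma approx_r {u v} p : approx u v -> approx (u ++ p) (v ++ p).
Proof.
move/approxE=> H; apply/approxE => w0.
by rewrite !catA -(dh_comp c (w0 ++ u)) -(dh_comp c (w0 ++ v)) H.
Qed.

Lemma approx_l {u v} p : approx u v -> approx (p ++ u) (p ++ v).
Proof.
move/approxE=> H; apply/approxE => w0.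
by rewrite !catA H.
Qed.

Lemma approx_fun {u v} : approx u v -> approx u = approx v.
Proof.
move=> H; apply: functional_extensionality => w; apply: propositional_extensionality.
split => H'.
- exact (approx_trans (approx_sym H) H').
- exact (approx_trans H H').
Qed.

Lemma cls_eq {u v} : approx u v -> cls_of u = cls_of v.
Proof.
move=> H; rewrite /Defs.cls_of.
move: (ex_intro _ u _) (ex_intro _ v _).
rewrite (approx_fun H) => p1 p2.
by rewrite (proof_irrelevance _ p1 p2).
Qed.

Lemma cls_eq_inv {u v} : cls_of u = cls_of v -> approx u v.
Proof.
move=> /(f_equal (@proj1_sig _ _)) /= ->; exact: approx_refl.
Qed.

Lemma cls_surj (K : cls delta c) : exists w, K = cls_of w.
Proof.
case: K => C [w Hw]; exists w; subst C.
rewrite /Defs.cls_of; f_equal; exact: proof_irrelevance.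
Qed.

Lemma LE (U : state delta c) : Lang U = fun u => U (cls_of (rev u)).
Proof.
apply: functional_extensionality => u; apply: propositional_extensionality.
rewrite /Lang /sigma_hat; split.
- case=> w [/cls_eq_inv H HU].
  have := approx_r (rev u) H; rewrite cat0s => /cls_eq ->; exact: HU.
- move=> H; by exists [::].
Qed.

Definition sat (K : seq Sigma -> Prop) :=
  forall u v, approx (rev u) (rev v) -> K u -> K v.

Lemma imgE K : (exists U : state delta c, K = Lang U) <-> sat K.
Proof.
split.
- case=> U ->; rewrite LE => u v H; by rewrite (cls_eq H).
- move=> S; exists (fun C => exists w, C = cls_of w /\ K (rev w)).
  rewrite LE; apply: functional_extensionality => u; apply: propositional_extensionality.
  split.
  + move=> Ku; exists (rev u); by rewrite revK.
  + case=> w [/cls_eq_inv H Kw]; apply: (S (rev w)) Kw.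
    rewrite revK; exact: approx_sym.
Qed.

End Aux.

Theorem mainTheorem6 (Sigma : finType) (X : Type) (delta : X -> Sigma -> X)
    (c : X -> Prop) :
  let L := @Lang Sigma X delta c in
  (* the image of L is a preformation of languages *)
  preformation (fun K : seq Sigma -> Prop => exists U, K = L U) /\
  (* L is injective, hence a bijection onto its image *)
  (forall U V, L U = L V -> U = V) /\
  (* L is a complete Boolean algebra homomorphism *)
  (forall (I : Type) (F : I -> @state Sigma X delta c),
      L (state_union F) = (fun u => exists i, L (F i) u)) /\
  (forall U, L (state_compl U) = (fun u => ~ L U u)) /\
  (* transitions correspond to (left) language derivatives *)
  (forall U (a : Sigma), L (sigma_hat U [:: a]) = lderiv a (L U)) /\
  (forall U (u : seq Sigma), L (sigma_hat U u) = (fun v => L U (u ++ v))) /\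
  (* final states correspond to languages containing the empty word *)
  (forall U, final U <-> L U [::]).
Proof.
move=> L; rewrite /L.
have SH : forall (U : state delta c) (u : seq Sigma), Lang (sigma_hat U u) = (fun v => Lang U (u ++ v)).
  move=> U u; rewrite !LE; apply: functional_extensionality => v.
  apply: propositional_extensionality; rewrite /sigma_hat rev_cat; split.
  - case=> w [/cls_eq_inv H HU]; have := approx_r (rev u) (approx_sym H).
    by move/cls_eq <-.
  - move=> H; by exists (rev v).
split; last split; last split; last split; last split; last split.
- split; last split; last split.
  + split; last split.
    * move=> I F HF; apply/imgE => u v H [i Hi]; exists i.
      exact: (proj1 (imgE _) (HF i)) H Hi.
    * move=> I F HF; apply/imgE => u v H Hi i.
      exact: (proj1 (imgE _) (HF i)) H (Hi i).
    * move=> K /imgE S; apply/imgE => u v H nK Kv; apply: nK.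
      exact: S (approx_sym H) Kv.
  + move=> K /imgE S nE; have [u Ku] : exists u, K u.
      apply: NNPP => nex; apply: nE; apply: functional_extensionality => u.
      apply: propositional_extensionality; split => // Ku; apply: nex; by exists u.
    exists (fun v => approx delta c (rev u) (rev v)); split; last first.
      move=> v H; exact: S H Ku.
    split; [|split].
    * apply/imgE => v w H H'; exact: approx_trans H' H.
    * move=> E; have : empty_lang u by rewrite -E; exact: approx_refl.
      by [].
    * move=> b /imgE Sb Hb; case: (classic (exists v, b v)) => [[v bv]|nex].
      -- right; apply: functional_extensionality => w.
         apply: propositional_extensionality; split; first exact: Hb.
         move=> Hw; exact: (Sb v w (approx_trans (approx_sym (Hb v bv)) Hw) bv).
      -- left; apply: functional_extensionality => w.
         apply: propositional_extensionality; split => // bw; apply: nex; by exists w.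
  + move=> a K /imgE S; apply/imgE => u v H; rewrite /lderiv; apply: S.
    rewrite !rev_cons -!cats1; exact: approx_r.
  + move=> a K /imgE S; apply/imgE => u v H; rewrite /rderiv; apply: S.
    rewrite !rev_rcons -(cat1s a (rev u)) -(cat1s a (rev v)); exact: approx_l.
- move=> U V; rewrite !LE => H; apply: functional_extensionality => K.
  have [w ->] := cls_surj K.
  have := f_equal (fun f => f (rev w)) H; rewrite /= revK; by move=> ->.
- move=> I F; rewrite !LE; apply: functional_extensionality => u.
  apply: propositional_extensionality; split; case=> i Hi; exists i; [by rewrite LE | by rewrite LE in Hi].
- by move=> U; rewrite !LE.
- move=> U a; rewrite SH; by [].
- exact: SH.
- move=> U; by rewrite LE.
Qed.
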